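(* Fix $V_{\sf P}\ge0$. Let ${\sf OPT}$ denote the oracle policy that knows the realization of $V_{\sf N}$ at time $0$ and at every time recommends two items of the type with the larger base utility (two niche items if $V_{\sf N}>V_{\sf P}$, two popular items otherwise). Then $$\lim_{\delta\to1}\lim_{p\to0}\frac{{\sf Util}({\sf PEAR})}{{\sf Util}({\sf OPT})}=1.$$
   Context: Model. Time $t=0,1,2,\dots$, discount factor $\delta\in[0,1)$. Two item types, popular ${\sf P}$ and niche ${\sf N}$, infinitely many items each; at each time $t$ the platform recommends a set $\pi_t$ of two fresh items of chosen types. Utility of item $i$: $u_i=V_{\tau(i)}+\epsilon_i$; outside option: $u_\emptyset=\epsilon_\emptyset$; all noises i.i.d. Gumbel with scale $1$ and mean $0$. User chooses $c_t=\arg\max_{j\in\pi_t\cup\{\emptyset\}}u_j$. $V_{\sf P}$ is a known constant; $V_{\sf N}$ is drawn once, fixed over time, independent of noise, with $\mathbb P(V_{\sf N}=(1-p)/p)=p$, $\mathbb P(V_{\sf N}=-1)=1-p$, $p\in(0,1)$. ${\sf Util}(\pi)=\sum_{t\ge0}\delta^t\mathbb E[\max_{j\in\pi_t\cup\{\emptyset\}}u_j]$ (expectation also over $V_{\sf N}$). Policy ${\sf PEAR}$: let $\rho_1=\frac{e^{(1-p)/p}}{1+e^{V_{\sf P}}+e^{(1-p)/p}}$, $\rho_2=\frac{e^{-1}}{1+e^{V_{\sf P}}+e^{-1}}$. Maintain counters $S,F$ (initially $0$) and $p_0=p$. At each time $t$: if $p_t\ge p$, recommend one popular and one niche item; if the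 niche item is chosen increment $S$, otherwise increment $F$. If $p_t<p$, recommend two popular items. Then set $p_{t+1}=\left(1+\frac{1-p}{p}\cdot\frac{\rho_2^S(1-\rho_2)^F}{\rho_1^S(1-\rho_1)^F}\right)^{-1}$. *)

(* Defs.v *)
From Stdlib Require Import Reals Arith Bool.
From Coquelicot Require Import Coquelicot.
Open Scope R_scope.

(* Expected utility of the best option among a recommended pair with base
   utilities a, b, plus the outside option (base utility 0), when all noises
   are i.i.d. Gumbel with scale 1 and MEAN 0:
     E[max(eps0, a+eps1, b+eps2)] = ln(1 + e^a + e^b). *)
Definition emax2 (a b : R) : R := ln (1 + exp a + exp b).

(* Logit probability that the niche item (base utility v) is chosen from the
   pair {popular (base VP), niche (base v)} plus outside option. *)
Definition choiceN (VP v : R) : R := exp v / (1 + exp VP + exp v).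

Definition vhigh (p : R) : R := (1 - p) / p.
Definition vlow : R := -1.

Definition rho1 (VP p : R) : R := exp (vhigh p) / (1 + exp VP + exp (vhigh p)).
Definition rho2 (VP : R) : R := exp (-1) / (1 + exp VP + exp (-1)).

(* PEAR's posterior p_t as a function of the counters (S,F); for S = F = 0
   it equals p = p_0. *)
Definition posterior (VP p : R) (s f : nat) : R :=
  / (1 + (1 - p) / p *
         ((rho2 VP ^ s * (1 - rho2 VP) ^ f) /
          (rho1 VP p ^ s * (1 - rho1 VP p) ^ f))).

(* PEAR explores (recommends one popular + one niche) iff p_t >= p. *)
Definition explore (VP p : R) (s f : nat) : bool :=
  if Rle_dec p (posterior VP p s f) then true else false.

(* Probability, given the realization V_N = v, that PEAR's counters equal
   (s,f) at time t. *)
Fixpoint pear_prob (VP p v : R) (t s f : nat) {struct t} : R :=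
  match t with
  | O => if (Nat.eqb s 0 && Nat.eqb f 0)%bool then 1 else 0
  | Datatypes.S t' =>
      (if explore VP p s f then 0 else pear_prob VP p v t' s f)
      + match s with
        | O => 0
        | Datatypes.S s' =>
            if explore VP p s' f then pear_prob VP p v t' s' f * choiceN VP v else 0
        end
      + match f with
        | O => 0
        | Datatypes.S f' =>
            if explore VP p s f' then pear_prob VP p v t' s f' * (1 - choiceN VP v) else 0
        end
  end.

Definition pear_stage_util (VP p v : R) (s f : nat) : R :=
  if explore VP p s f then emax2 VP v else emax2 VP VP.

(* E[max utility at time t | V_N = v] under PEAR (counters at time t satisfy
   s + f <= t, so summing over [0,t]^2 covers the support). *)
Definition pear_time_util (VP p v : R) (t : nat) : R :=
  sum_f_R0 (fun s => sum_f_R0 (fun f =>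
      pear_prob VP p v t s f * pear_stage_util VP p v s f) t) t.

Definition UtilPEAR (VP p delta : R) : R :=
  Series (fun t => delta ^ t *
    (p * pear_time_util VP p (vhigh p) t + (1 - p) * pear_time_util VP p vlow t)).

Definition opt_stage_util (VP v : R) : R :=
  if Rlt_dec VP v then emax2 v v else emax2 VP VP.

Definition UtilOPT (VP p delta : R) : R :=
  Series (fun t => delta ^ t *
    (p * opt_stage_util VP (vhigh p) + (1 - p) * opt_stage_util VP vlow)).

(* Main.v *)
Require Import Defs.
From Stdlib Require Import Reals Lra Lia.
From Coquelicot Require Import Coquelicot.
Open Scope R_scope.

Definition ev (P : R -> Prop) := exists eta, 0 < eta /\ forall p, 0 < p < eta -> P p.

Lemma ball_R (x e y : R) : ball x e y <-> Rabs (y - x) < e.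
Proof. unfold ball; simpl; unfold AbsRing_ball, abs, minus, plus, opp; simpl. tauto. Qed.

Lemma ev_at_right P : ev P -> at_right 0 P.
Proof.
  intros [eta [H1 H2]]. exists (mkposreal eta H1). intros y Hy Hy0.
  apply ball_R in Hy. apply H2. change (Rabs (y - 0) < eta) in Hy. rewrite Rminus_0_r in Hy.
  apply Rabs_def2 in Hy. simpl in Hy0. destruct Hy. split; lra.
Qed.

Lemma at_right_ev P : at_right 0 P -> ev P.
Proof.
  intros [eps H]. exists eps. split. apply cond_pos.
  intros p Hp. apply H. apply ball_R. rewrite Rminus_0_r. rewrite Rabs_right; lra. lra.
Qed.

Lemma ev_and P Q : ev P -> ev Q -> ev (fun p => P p /\ Q p).
Proof.
  intros [a [Ha HP]] [b [Hb HQ]]. exists (Rmin a b). split.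
  apply Rmin_pos; auto. intros p Hp. pose proof (Rmin_l a b). pose proof (Rmin_r a b).
  split; [apply HP|apply HQ]; lra.
Qed.

Lemma ev_impl (P Q : R -> Prop) : (forall p, 0 < p -> P p -> Q p) -> ev P -> ev Q.
Proof. intros H [a [Ha HP]]. exists a. split; auto. intros p Hp. apply H. lra. auto. Qed.

Lemma lim0_fl f l : (forall eps, 0 < eps -> ev (fun p => Rabs (f p - l) < eps)) ->
  filterlim f (at_right 0) (locally l).
Proof.
  intros H. apply filterlim_locally. intros eps. apply ev_at_right.
  destruct (H eps (cond_pos eps)) as [eta [He Hp]]. exists eta; split; auto.
Qed.

Lemma fl_lim0 f l : filterlim f (at_right 0) (locally l) ->
  (forall eps, 0 < eps -> ev (fun p => Rabs (f p - l) < eps)).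
Proof.
  intros H eps Heps. apply at_right_ev. 
  generalize (proj1 (filterlim_locally f l) H (mkposreal eps Heps)).
  apply filter_imp. intros x Hx. apply ball_R in Hx. exact Hx.
Qed.

Lemma fl_mult {T} {F : (T -> Prop) -> Prop} {FF : Filter F} (f g : T -> R) (a b : R) :
  filterlim f F (locally a) -> filterlim g F (locally b) ->
  filterlim (fun x => f x * g x) F (locally (a * b)).
Proof. intros Hf Hg. eapply filterlim_comp_2; [exact Hf|exact Hg|]. apply (filterlim_mult a b). Qed.

Lemma fl_plus {T} {F : (T -> Prop) -> Prop} {FF : Filter F} (f g : T -> R) (a b : R) :
  filterlim f F (locally a) -> filterlim g F (locally b) ->
  filterlim (fun x => f x + g x) F (locally (a + b)).
Proof. intros Hf Hg. eapply filterlim_comp_2; [exact Hf|exact Hg|]. apply (filterlim_plus a b). Qed.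

Lemma fl_eq {T} {F : (T -> Prop) -> Prop} (f : T -> R) (a b : R) :
  a = b -> filterlim f F (locally a) -> filterlim f F (locally b).
Proof. intros ->; auto. Qed.

Lemma fl_pow {T} {F : (T -> Prop) -> Prop} {FF : Filter F} (f : T -> R) (a : R) n :
  filterlim f F (locally a) -> filterlim (fun x => f x ^ n) F (locally (a ^ n)).
Proof.
  intros Hf. induction n as [|n IH]; simpl.
  - apply filterlim_const.
  - apply fl_mult; auto.
Qed.

Fixpoint pp (ex : nat -> nat -> bool) (c : R) (t s f : nat) {struct t} : R :=
  match t with
  | O => if (Nat.eqb s 0 && Nat.eqb f 0)%bool then 1 else 0
  | Datatypes.S t' =>
      (if ex s f then 0 else pp ex c t' s f)
      + match s with
        | O => 0
        | Datatypes.S s' =>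
            if ex s' f then pp ex c t' s' f * c else 0
        end
      + match f with
        | O => 0
        | Datatypes.S f' =>
            if ex s f' then pp ex c t' s f' * (1 - c) else 0
        end
  end.

Lemma pear_pp VP p v t s f :
  pear_prob VP p v t s f = pp (explore VP p) (choiceN VP v) t s f.
Proof.
  revert s f. induction t as [|t IH]; intros s f; simpl; auto.
  rewrite !IH. destruct s; destruct f; rewrite ?IH; reflexivity.
Qed.

Lemma pp_nonneg ex c t s f : 0 <= c <= 1 -> 0 <= pp ex c t s f.
Proof.
  intros Hc. revert s f. induction t as [|t IH]; intros s f; simpl.
  - destruct (_ && _)%bool; lra.
  - apply Rplus_le_le_0_compat; [apply Rplus_le_le_0_compat|].
    + destruct (ex s f); [lra|apply IH].
    + destruct s; [lra|]. destruct (ex s f); [|lra]. apply Rmult_le_pos; auto; lra.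
    + destruct f; [lra|]. destruct (ex s f); [|lra]. apply Rmult_le_pos; auto; lra.
Qed.

Lemma pp_supp ex c t s f : (t < s + f)%nat -> pp ex c t s f = 0.
Proof.
  revert s f. induction t as [|t IH]; intros s f H; simpl.
  - destruct s; destruct f; simpl; try lia; reflexivity.
  - rewrite IH by lia.
    assert (A : match s with O => 0 | Datatypes.S s' =>
            if ex s' f then pp ex c t s' f * c else 0 end = 0).
    { destruct s; auto. rewrite IH by lia. destruct (ex s f); ring. }
    assert (B : match f with O => 0 | Datatypes.S f' =>
            if ex s f' then pp ex c t s f' * (1 - c) else 0 end = 0).
    { destruct f; auto. rewrite IH by lia. destruct (ex s f); ring. }
    rewrite A, B. destruct (ex s f); ring.
Qed.

Lemma sum_zero n : sum_f_R0 (fun _ => 0) n = 0.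
Proof. induction n; simpl; auto. rewrite IHn; ring. Qed.

Lemma sum_shift (g : nat -> R) n :
  sum_f_R0 (fun i => match i with O => 0 | Datatypes.S i' => g i' end) (Datatypes.S n)
  = sum_f_R0 g n.
Proof.
  induction n as [|n IH]. simpl. ring.
  rewrite tech5, IH. rewrite (tech5 g). reflexivity.
Qed.

Lemma sum_shift' (g : nat -> R) n : g (Datatypes.S n) = 0 ->
  sum_f_R0 (fun i => match i with O => 0 | Datatypes.S i' => g i' end) (Datatypes.S n)
  = sum_f_R0 g (Datatypes.S n).
Proof. intros H. rewrite sum_shift, tech5, H. ring. Qed.

Lemma sum_plus' (a b : nat -> R) n : sum_f_R0 (fun i => a i + b i) n = sum_f_R0 a n + sum_f_R0 b n.
Proof. apply sum_plus. Qed.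

Lemma sum_delta x n : sum_f_R0 (fun i => if Nat.eqb i 0 then x else 0) n = x.
Proof. induction n; simpl; auto. rewrite IHn; ring. Qed.

Lemma pp_mass ex c t N : (t <= N)%nat ->
  sum_f_R0 (fun s => sum_f_R0 (fun f => pp ex c t s f) N) N = 1.
Proof.
  revert N. induction t as [|t IH]; intros N HN.
  - rewrite (sum_eq _ (fun s => if Nat.eqb s 0 then 1 else 0)). apply sum_delta.
    intros s _. destruct s; simpl.
    + apply sum_delta.
    + apply sum_zero.
  - destruct N as [|N]; [lia|].
    rewrite <- (IH (Datatypes.S N)) by lia.
    simpl pp.
    set (A := fun s f => if ex s f then 0 else pp ex c t s f).
    set (B := fun s f => if ex s f then pp ex c t s f * c else 0).
    set (C := fun s f => if ex s f then pp ex c t s f * (1 - c) else 0).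
    transitivity (sum_f_R0 (fun s => sum_f_R0 (fun f => A s f) (Datatypes.S N)) (Datatypes.S N)
      + sum_f_R0 (fun s => match s with O => 0 | Datatypes.S s' => sum_f_R0 (fun f => B s' f) (Datatypes.S N) end) (Datatypes.S N)
      + sum_f_R0 (fun s => sum_f_R0 (fun f => match f with O => 0 | Datatypes.S f' => C s f' end) (Datatypes.S N)) (Datatypes.S N)).
    { rewrite <- !sum_plus. apply sum_eq. intros s _.
      destruct s.
      - rewrite Rplus_0_r. rewrite <- sum_plus.
        apply sum_eq. intros f _. unfold A, C. destruct f; ring.
      - rewrite <- !sum_plus. apply sum_eq. intros f _. unfold A, B, C. destruct f; ring. }
    rewrite sum_shift'.
    2:{ unfold B. rewrite (sum_eq _ (fun _ => 0)). apply sum_zero.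
        intros f _. rewrite pp_supp by lia. destruct (ex _ _); ring. }
    rewrite (sum_eq (fun s => sum_f_R0 (fun f => match f with O => 0 | Datatypes.S f' => C s f' end) (Datatypes.S N)) (fun s => sum_f_R0 (fun f => C s f) (Datatypes.S N))).
    2:{ intros s _. apply sum_shift'. unfold C. rewrite pp_supp by lia. destruct (ex _ _); ring. }
    rewrite <- !sum_plus. apply sum_eq. intros s _. rewrite <- !sum_plus. apply sum_eq.
    intros f _. unfold A, B, C. destruct (ex s f); ring.
Qed.

Definition simp (c : R) (t s f : nat) : R :=
  match f with
  | O => if Nat.eqb s t then c ^ t else 0
  | 1%nat => if Nat.ltb s t then c ^ s * (1 - c) else 0
  | _ => 0
  end.

Lemma pp_simple ex c T :
  (forall s f, (s <= T)%nat -> (f <= T)%nat -> ex s f = Nat.eqb f 0) ->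
  forall t s f, (t <= T)%nat -> (s <= T)%nat -> (f <= T)%nat -> pp ex c t s f = simp c t s f.
Proof.
  intros Hex t. induction t as [|t IH]; intros s f Ht Hs Hf.
  - simpl. unfold simp. destruct f as [|[|f]]; destruct s; simpl; auto.
  - simpl pp. rewrite (Hex s f) by lia.
    destruct f as [|[|f]].
    + simpl Nat.eqb. cbv iota.
      destruct s as [|s].
      * unfold simp. simpl. ring.
      * rewrite (Hex s 0%nat) by lia. simpl Nat.eqb. cbv iota. rewrite IH by lia.
        unfold simp. simpl Nat.eqb.
        destruct (Nat.eqb s t); simpl; ring.
    + simpl Nat.eqb. cbv iota. rewrite IH by lia.
      rewrite (Hex s 0%nat) by lia. simpl Nat.eqb. cbv iota. rewrite IH by lia.
      assert (M : match s with O => 0 | Datatypes.S s' =>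
            if ex s' 1%nat then pp ex c t s' 1 * c else 0 end = 0).
      { destruct s; auto. rewrite (Hex s 1%nat) by lia. reflexivity. }
      rewrite M. unfold simp.
      destruct (Nat.lt_trichotomy s t) as [H|[H|H]].
      * rewrite (proj2 (Nat.ltb_lt s t) H), (proj2 (Nat.ltb_lt s (Datatypes.S t))) by lia.
        rewrite (proj2 (Nat.eqb_neq s t)) by lia. ring.
      * subst. rewrite Nat.ltb_irrefl, Nat.eqb_refl, (proj2 (Nat.ltb_lt t (Datatypes.S t))) by lia. ring.
      * rewrite (proj2 (Nat.ltb_ge s t)), (proj2 (Nat.ltb_ge s (Datatypes.S t))) by lia.
        rewrite (proj2 (Nat.eqb_neq s t)) by lia. ring.
    + simpl Nat.eqb. cbv iota. rewrite IH by lia.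
      rewrite (Hex s (Datatypes.S f)) by lia. simpl Nat.eqb. cbv iota.
      destruct s as [|s].
      * unfold simp. ring.
      * rewrite (Hex s (Datatypes.S (Datatypes.S f))) by lia. simpl Nat.eqb. unfold simp. ring.
Qed.

Lemma geom_sum c n : sum_f_R0 (fun s => c ^ s * (1 - c)) n = 1 - c ^ (Datatypes.S n).
Proof. induction n as [|n IH]. simpl. ring. rewrite tech5, IH. simpl. ring. Qed.

Lemma simp_util c t E L :
  sum_f_R0 (fun s => sum_f_R0 (fun f => simp c t s f * (if Nat.eqb f 0 then E else L)) t) t
  = c ^ t * E + (1 - c ^ t) * L.
Proof.
  rewrite (sum_eq _ (fun s => (if Nat.eqb s t then c ^ t else 0) * E
                       + (if Nat.ltb s t then c ^ s * (1 - c) else 0) * L)).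
  2:{ intros s Hs. destruct t as [|t].
      - simpl. unfold simp. destruct s; simpl; ring.
      - rewrite decomp_sum by lia. simpl pred. destruct t as [|t].
        + simpl. unfold simp. ring.
        + rewrite decomp_sum by lia. simpl pred.
          rewrite (sum_eq _ (fun _ => 0)). rewrite sum_zero. unfold simp. simpl. ring.
          intros; unfold simp; ring. }
  destruct t as [|t].
  - simpl. ring.
  - rewrite tech5. rewrite Nat.eqb_refl, Nat.ltb_irrefl.
    rewrite (sum_eq _ (fun s => c ^ s * (1 - c) * L)).
    2:{ intros s Hs. replace (Nat.eqb s (Datatypes.S t)) with false.
        replace (Nat.ltb s (Datatypes.S t)) with true. ring.
        symmetry; apply Nat.ltb_lt; lia. symmetry; apply Nat.eqb_neq; lia. }
    rewrite <- (scal_sum (fun s => c ^ s * (1 - c))). rewrite geom_sum. simpl. ring.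
Qed.

Lemma choiceN_bounds VP v : 0 < choiceN VP v < 1.
Proof.
  unfold choiceN. pose proof (exp_pos VP). pose proof (exp_pos v).
  split. apply Rdiv_lt_0_compat; lra.
  apply (Rmult_lt_reg_r (1 + exp VP + exp v)). lra.
  unfold Rdiv. rewrite Rmult_assoc, Rinv_l by lra. lra.
Qed.

Lemma choiceN_mono VP v w : v <= w -> choiceN VP v <= choiceN VP w.
Proof.
  intros H. unfold choiceN. pose proof (exp_pos VP). pose proof (exp_pos v).
  pose proof (exp_pos w). assert (exp v <= exp w).
  { destruct (Req_dec v w). subst; lra. left; apply exp_increasing; lra. }
  unfold Rdiv. apply (Rmult_le_reg_r (1 + exp VP + exp v)). lra.
  rewrite Rmult_assoc, Rinv_l by lra.
  apply (Rmult_le_reg_r (1 + exp VP + exp w)). lra.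
  replace (exp w * / (1 + exp VP + exp w) * (1 + exp VP + exp v) * (1 + exp VP + exp w))
    with (exp w * (1 + exp VP + exp v)) by (field; lra). nra.
Qed.

Lemma vhigh_exp p : 0 < p -> / p <= exp (vhigh p).
Proof.
  intros Hp. replace (/ p) with (1 + vhigh p) by (unfold vhigh; field; lra).
  apply exp_ineq1_le.
Qed.

Lemma one_minus_rho1 VP p : 0 < p -> 1 - rho1 VP p <= (1 + exp VP) * p.
Proof.
  intros Hp. unfold rho1. pose proof (exp_pos VP). pose proof (vhigh_exp p Hp).
  pose proof (exp_pos (vhigh p)).
  replace (1 - exp (vhigh p) / (1 + exp VP + exp (vhigh p)))
    with ((1 + exp VP) / (1 + exp VP + exp (vhigh p))) by (field; lra).
  unfold Rdiv. apply Rmult_le_compat_l. lra.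
  apply (Rmult_le_reg_l (1 + exp VP + exp (vhigh p))). lra.
  rewrite Rinv_r by lra.
  assert (1 <= exp (vhigh p) * p).
  { apply (Rmult_le_compat_r p) in H0; [|lra]. rewrite Rinv_l in H0; lra. }
  nra.
Qed.

Lemma post_iff p R : 0 < p < 1 -> 0 <= R ->
  (p <= / (1 + (1 - p) / p * R) <-> R <= 1).
Proof.
  intros Hp HR. assert (HD : 0 < 1 + (1 - p) / p * R).
  { assert (0 <= (1 - p) / p * R). apply Rmult_le_pos; auto.
    unfold Rdiv; apply Rmult_le_pos; [lra| left; apply Rinv_0_lt_compat; lra]. lra. }
  assert (E : p * (1 + (1 - p) / p * R) = p + (1 - p) * R) by (field; lra).
  split; intros H.
  - apply (Rmult_le_compat_r (1 + (1 - p) / p * R)) in H; [|lra].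
    rewrite Rinv_l in H by lra. rewrite E in H. nra.
  - apply (Rmult_le_reg_r (1 + (1 - p) / p * R)); [lra|].
    rewrite Rinv_l by lra. rewrite E. nra.
Qed.

Lemma pow_decr x m n : 0 <= x <= 1 -> (m <= n)%nat -> x ^ n <= x ^ m.
Proof.
  intros Hx H. induction H. lra. simpl.
  assert (0 <= x ^ m0) by (apply pow_le; lra). nra.
Qed.

Lemma explore_simple VP T :
  ev (fun p => forall s f, (s <= T)%nat -> (f <= T)%nat -> explore VP p s f = Nat.eqb f 0).
Proof.
  set (r2 := rho2 VP).
  assert (Hr2 : 0 < r2 < 1) by apply (choiceN_bounds VP vlow).
  set (k := r2 ^ T * (1 - r2) ^ T).
  assert (Hk : 0 < k) by (apply Rmult_lt_0_compat; apply pow_lt; lra).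
  pose proof (exp_pos VP).
  exists (Rmin (1/2) (k / (1 + exp VP))). split.
  { apply Rmin_pos. lra. apply Rdiv_lt_0_compat; lra. }
  intros p Hp s f Hs Hf.
  pose proof (Rmin_l (1/2) (k / (1 + exp VP))). pose proof (Rmin_r (1/2) (k / (1 + exp VP))).
  assert (Hp1 : 0 < p < 1) by lra.
  assert (Hr1 : 0 < rho1 VP p < 1) by apply (choiceN_bounds VP (vhigh p)).
  assert (H1r : 1 - rho1 VP p < k).
  { pose proof (one_minus_rho1 VP p (proj1 Hp)).
    assert ((1 + exp VP) * p < k).
    { apply (Rmult_lt_reg_r (/ (1 + exp VP))). apply Rinv_0_lt_compat; lra.
      replace ((1 + exp VP) * p * / (1 + exp VP)) with p by (field; lra). unfold Rdiv in *. lra. }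
    lra. }
  assert (Hvh : 0 < vhigh p) by (unfold vhigh; apply Rdiv_lt_0_compat; lra).
  assert (Hle : r2 <= rho1 VP p) by (apply choiceN_mono; unfold vlow; lra).
  assert (Hden : 0 < rho1 VP p ^ s * (1 - rho1 VP p) ^ f)
    by (apply Rmult_lt_0_compat; apply pow_lt; lra).
  assert (Hnum : 0 <= r2 ^ s * (1 - r2) ^ f)
    by (apply Rmult_le_pos; apply pow_le; lra).
  unfold explore, posterior. fold r2.
  set (R0 := r2 ^ s * (1 - r2) ^ f / (rho1 VP p ^ s * (1 - rho1 VP p) ^ f)).
  assert (HR0 : 0 <= R0) by (unfold R0; apply Rmult_le_pos; [auto|left; apply Rinv_0_lt_compat; auto]).
  destruct f as [|f].
  - simpl Nat.eqb. destruct (Rle_dec p _) as [_|Hn]; auto. exfalso; apply Hn.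
    apply post_iff; auto. unfold R0. simpl. rewrite !Rmult_1_r.
    apply (Rmult_le_reg_r (rho1 VP p ^ s)). apply pow_lt; lra.
    unfold Rdiv. rewrite Rmult_assoc, Rinv_l, Rmult_1_l, Rmult_1_r.
    apply pow_incr; lra. apply Rgt_not_eq, pow_lt; lra.
  - simpl Nat.eqb. destruct (Rle_dec p _) as [Hy|_]; auto. exfalso.
    apply post_iff in Hy; auto. unfold R0 in Hy.
    assert (k <= r2 ^ s * (1 - r2) ^ Datatypes.S f).
    { unfold k. apply Rmult_le_compat; try (apply pow_le; lra); apply pow_decr; lia || lra. }
    assert (rho1 VP p ^ s * (1 - rho1 VP p) ^ Datatypes.S f <= 1 - rho1 VP p).
    { assert (rho1 VP p ^ s <= 1) by (rewrite <- (pow1 s); apply pow_incr; lra).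
      assert ((1 - rho1 VP p) ^ Datatypes.S f <= 1 - rho1 VP p).
      { simpl. assert ((1 - rho1 VP p) ^ f <= 1) by (apply (pow_decr (1 - rho1 VP p) 0 f); lra || lia).
        assert (0 <= (1 - rho1 VP p) ^ f) by (apply pow_le; lra). nra. }
      assert (0 <= (1 - rho1 VP p) ^ Datatypes.S f) by (apply pow_le; lra).
      assert (0 <= rho1 VP p ^ s) by (apply pow_le; lra). nra. }
    apply (Rmult_le_compat_r (rho1 VP p ^ s * (1 - rho1 VP p) ^ Datatypes.S f)) in Hy; [|lra].
    unfold Rdiv in Hy. rewrite Rmult_assoc, Rinv_l, Rmult_1_r, Rmult_1_l in Hy by lra. lra.
Qed.

Lemma emax2_nonneg a b : 0 <= emax2 a b.
Proof.
  unfold emax2. rewrite <- ln_1. apply ln_le. lra.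
  pose proof (exp_pos a); pose proof (exp_pos b); lra.
Qed.

Lemma time_util_eq VP p v t :
  (forall s f, (s <= t)%nat -> (f <= t)%nat -> explore VP p s f = Nat.eqb f 0) ->
  pear_time_util VP p v t =
  choiceN VP v ^ t * emax2 VP v + (1 - choiceN VP v ^ t) * emax2 VP VP.
Proof.
  intros H. unfold pear_time_util. rewrite <- simp_util.
  apply sum_eq; intros s Hs; apply sum_eq; intros f Hf.
  rewrite pear_pp, (pp_simple _ _ t H) by lia. unfold pear_stage_util. rewrite H by lia.
  reflexivity.
Qed.

Lemma time_util_bound VP p v t :
  0 <= pear_time_util VP p v t <= emax2 VP v + emax2 VP VP.
Proof.
  pose proof (choiceN_bounds VP v) as Hc.
  pose proof (emax2_nonneg VP v). pose proof (emax2_nonneg VP VP).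
  assert (Hu : forall s f, 0 <= pear_stage_util VP p v s f <= emax2 VP v + emax2 VP VP).
  { intros s f. unfold pear_stage_util. destruct (explore _ _ _ _); lra. }
  unfold pear_time_util. split.
  - apply cond_pos_sum. intros s. apply cond_pos_sum. intros f.
    apply Rmult_le_pos. rewrite pear_pp. apply pp_nonneg; lra. apply Hu.
  - rewrite <- (Rmult_1_r (emax2 VP v + emax2 VP VP)).
    rewrite <- (pp_mass (explore VP p) (choiceN VP v) t t) by lia.
    rewrite scal_sum. apply sum_Rle. intros s _.
    rewrite Rmult_comm, scal_sum. apply sum_Rle. intros f _.
    rewrite pear_pp. apply Rmult_le_compat_l.
    apply pp_nonneg; lra. apply Hu.
Qed.

Lemma ln_1p_le x : 0 <= x -> ln (1 + x) <= x.
Proof. intros Hx. rewrite <- (ln_exp x) at 2. apply ln_le. lra. apply exp_ineq1_le. Qed.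

Lemma lim_plnv K a : 0 <= K -> 1 <= a ->
  filterlim (fun p => p * ln (K + a * exp (vhigh p))) (at_right 0) (locally 1).
Proof.
  intros HK Ha. apply lim0_fl. intros eps Heps.
  set (M := 2 + Rabs (ln a) + K).
  assert (HM : 0 < M) by (unfold M; pose proof (Rabs_pos (ln a)); lra).
  exists (Rmin 1 (eps / M)). split. apply Rmin_pos; [lra|apply Rdiv_lt_0_compat; lra].
  intros p Hp. pose proof (Rmin_l 1 (eps / M)). pose proof (Rmin_r 1 (eps / M)).
  assert (Hp1 : 0 < p < 1) by lra.
  assert (HpM : p * M < eps).
  { apply (Rmult_lt_reg_r (/ M)). apply Rinv_0_lt_compat; lra.
    replace (p * M * / M) with p by (field; lra). unfold Rdiv in *. lra. }
  set (v := vhigh p).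
  pose proof (vhigh_exp p (proj1 Hp1)) as Hev. fold v in Hev.
  pose proof (exp_pos v) as Hv.
  assert (Hae : 1 <= a * exp v * p).
  { apply (Rmult_le_compat_r p) in Hev; [|lra]. rewrite Rinv_l in Hev by lra. nra. }
  assert (Hlo : ln a + v <= ln (K + a * exp v)).
  { replace (ln a + v) with (ln (a * exp v)) by (rewrite ln_mult, ln_exp; lra).
    apply ln_le. nra. lra. }
  assert (Hhi : ln (K + a * exp v) <= ln a + v + K * p).
  { apply Rle_trans with (ln (a * exp v * (1 + K * p))).
    apply ln_le. nra. nra.
    rewrite ln_mult, ln_mult, ln_exp by nra.
    pose proof (ln_1p_le (K * p)). assert (0 <= K * p) by nra. lra. }
  assert (Hpv : p * v = 1 - p) by (unfold v, vhigh; field; lra).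
  set (X := ln (K + a * exp v)) in *.
  assert (A1 : p * (ln a + v) <= p * X) by (apply Rmult_le_compat_l; lra).
  assert (A2 : p * X <= p * (ln a + v + K * p)) by (apply Rmult_le_compat_l; lra).
  pose proof (Rle_abs (ln a)). pose proof (Rabs_pos (ln a)).
  assert (p * ln a <= p * Rabs (ln a)) by (apply Rmult_le_compat_l; lra).
  assert (- (p * Rabs (ln a)) <= p * ln a).
  { pose proof (Rabs_maj2 (ln a)). nra. }
  assert (K * p * p <= K * p) by (assert (0 <= K * p) by nra; nra).
  unfold M in HpM.
  apply Rabs_def1; nra.
Qed.

Lemma lim_pE VP : filterlim (fun p => p * emax2 VP (vhigh p)) (at_right 0) (locally 1).
Proof.
  eapply filterlim_ext. 2: apply (lim_plnv (1 + exp VP) 1).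
  intros p. unfold emax2. rewrite Rmult_1_l. reflexivity.
  pose proof (exp_pos VP); lra. lra.
Qed.

Lemma lim_pEE : filterlim (fun p => p * emax2 (vhigh p) (vhigh p)) (at_right 0) (locally 1).
Proof.
  eapply filterlim_ext. 2: apply (lim_plnv 1 2); lra.
  intros p. unfold emax2. f_equal. f_equal. ring.
Qed.

Lemma lim_id : filterlim (fun p : R => p) (at_right 0) (locally 0).
Proof.
  apply lim0_fl. intros eps He. exists eps. split; auto. intros p Hp.
  rewrite Rminus_0_r, Rabs_right; lra.
Qed.

Lemma lim_rho1 VP : filterlim (fun p => rho1 VP p) (at_right 0) (locally 1).
Proof.
  apply lim0_fl. intros eps He. pose proof (exp_pos VP).
  exists (eps / (1 + exp VP)). split. apply Rdiv_lt_0_compat; lra.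
  intros p Hp. pose proof (one_minus_rho1 VP p (proj1 Hp)).
  pose proof (choiceN_bounds VP (vhigh p)). unfold rho1 in *. fold (choiceN VP (vhigh p)) in *.
  rewrite Rabs_left1 by lra.
  assert ((1 + exp VP) * p < eps).
  { apply (Rmult_lt_reg_r (/ (1 + exp VP))). apply Rinv_0_lt_compat; lra.
    replace ((1 + exp VP) * p * / (1 + exp VP)) with p by (field; lra). unfold Rdiv in *. lra. }
  lra.
Qed.

Lemma geom_scaled k q : 0 <= q < 1 -> is_series (fun t => k * q ^ t) (k / (1 - q)).
Proof.
  intros Hq. assert (H : Rabs q < 1) by (rewrite Rabs_right; lra).
  pose proof (is_series_scal_l k _ _ (is_series_geom q H)) as H2. exact H2.
Qed.

Lemma ev_forall_lt (P : nat -> R -> Prop) N :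
  (forall t, ev (P t)) -> ev (fun p => forall t, (t < N)%nat -> P t p).
Proof.
  intros H. induction N as [|N IH].
  - exists 1. split. lra. intros; lia.
  - eapply ev_impl. 2: apply (ev_and _ _ IH (H N)).
    intros p _ [H1 H2] t Ht. destruct (Nat.eq_dec t N). subst; auto. apply H1; lia.
Qed.

Lemma ev_witness P : ev P -> exists p, P p.
Proof. intros [e [He H]]. exists (e / 2). apply H. lra. Qed.

Lemma dom_series (a : R -> nat -> R) (b : nat -> R) (r B : R) :
  0 <= r < 1 ->
  (forall t, filterlim (fun p => a p t) (at_right 0) (locally (b t))) ->
  ev (fun p => forall t, Rabs (a p t) <= B * r ^ t) ->
  filterlim (fun p => Series (a p)) (at_right 0) (locally (Series b)).
Proof.
  intros Hr Hlim Hdom.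
  assert (HB : 0 <= B).
  { destruct (ev_witness _ Hdom) as [p Hp]. specialize (Hp 0%nat). simpl in Hp.
    pose proof (Rabs_pos (a p 0%nat)). lra. }
  assert (Hb : forall t, Rabs (b t) <= B * r ^ t).
  { intros t. destruct (Rle_lt_dec (Rabs (b t)) (B * r ^ t)) as [|Hlt]; auto. exfalso.
    pose proof (fl_lim0 _ _ (Hlim t) (Rabs (b t) - B * r ^ t) ltac:(lra)) as H1.
    destruct (ev_witness _ (ev_and _ _ H1 Hdom)) as [p [Hp1 Hp2]].
    specialize (Hp2 t).
    pose proof (Rabs_triang (a p t) (b t - a p t)).
    replace (a p t + (b t - a p t)) with (b t) in H by ring.
    rewrite Rabs_minus_sym in H. lra. }
  assert (Hexb : ex_series (fun t => B * r ^ t)) by (eexists; apply geom_scaled; lra).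
  assert (Hexs : forall (u : nat -> R), (forall t, Rabs (u t) <= B * r ^ t) -> ex_series u).
  { intros u Hu. apply (ex_series_le u (fun t => B * r ^ t)); auto. }
  apply lim0_fl. intros eps Heps.
  set (q := (1 + r) / 2).
  assert (Hq : 0 < q < 1) by (unfold q; lra).
  assert (Hrq : Rabs (r / q) < 1).
  { rewrite Rabs_right. apply (Rmult_lt_reg_r q). lra. unfold Rdiv.
    rewrite Rmult_assoc, Rinv_l, Rmult_1_r, Rmult_1_l by lra. unfold q; lra.
    apply Rle_ge, Rmult_le_pos; [lra|left; apply Rinv_0_lt_compat; lra]. }
  set (e2 := eps / 2 * (1 - q)).
  assert (He2 : 0 < e2) by (unfold e2; apply Rmult_lt_0_compat; lra).
  destruct (pow_lt_1_zero (r / q) Hrq (e2 / (2 * B + 1))) as [N HN].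
  { apply Rdiv_lt_0_compat; lra. }
  assert (Hfin : ev (fun p => forall t, (t < N)%nat -> Rabs (a p t - b t) < e2 * q ^ N)).
  { apply ev_forall_lt. intros t. apply fl_lim0; auto. apply Rmult_lt_0_compat; auto.
    apply pow_lt; lra. }
  eapply ev_impl. 2: apply (ev_and _ _ Hfin Hdom).
  intros p _ [H1 H2].
  assert (Hall : forall t, Rabs (a p t - b t) <= e2 * q ^ t).
  { intros t. destruct (Nat.lt_ge_cases t N) as [Ht|Ht].
    - left. eapply Rlt_le_trans. apply H1; auto. apply Rmult_le_compat_l. lra.
      apply pow_decr; lra || lia.
    - specialize (HN t Ht).
      assert (Hrt : r ^ t = (r / q) ^ t * q ^ t).
      { rewrite <- Rpow_mult_distr. f_equal. field. lra. }
      pose proof (Rabs_triang (a p t) (- b t)). rewrite Rabs_Ropp in H.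
      pose proof (H2 t). pose proof (Hb t).
      assert (Rabs (a p t - b t) <= 2 * B * ((r / q) ^ t * q ^ t)).
      { unfold Rminus. rewrite <- Hrt. lra. }
      rewrite Rabs_right in HN.
      2:{ apply Rle_ge, pow_le, Rmult_le_pos; [lra|left; apply Rinv_0_lt_compat; lra]. }
      assert (HqT : 0 < q ^ t) by (apply pow_lt; lra).
      assert ((r / q) ^ t * (2 * B + 1) < e2).
      { apply (Rmult_lt_compat_r (2 * B + 1)) in HN; [|lra].
        unfold Rdiv in HN at 2. rewrite Rmult_assoc, Rinv_l, Rmult_1_r in HN by lra. lra. }
      assert (0 <= (r / q) ^ t)
        by (apply pow_le, Rmult_le_pos; [lra|left; apply Rinv_0_lt_compat; lra]).
      nra. }
  pose proof (Hexs _ (H2)) as Ha.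
  pose proof (Hexs _ Hb) as Hbs.
  assert (Hex2 : ex_series (fun t => e2 * q ^ t)) by (eexists; apply geom_scaled; lra).
  rewrite <- (Series_minus (a p) b Ha Hbs).
  assert (Hexd : ex_series (fun t => Rabs (a p t - b t))).
  { apply (@ex_series_le R_AbsRing R_CompleteNormedModule _ (fun t => e2 * q ^ t)); auto.
    intros t. change (Rabs (Rabs (a p t - b t)) <= e2 * q ^ t). rewrite Rabs_Rabsolu. auto. }
  eapply Rle_lt_trans. apply Series_Rabs; auto.
  eapply Rle_lt_trans. apply (Series_le _ (fun t => e2 * q ^ t)); auto.
  intros t; split; auto. apply Rabs_pos.
  rewrite (is_series_unique _ _ (geom_scaled e2 q ltac:(lra))).
  unfold e2. replace (eps / 2 * (1 - q) / (1 - q)) with (eps / 2) by (field; lra). lra.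
Qed.

Lemma fl_inv x : x <> 0 -> filterlim Rinv (locally x) (locally (/ x)).
Proof.
  intros H. pose proof (filterlim_Rbar_inv (Finite x)) as H0. simpl in H0. apply H0.
  intro E. injection E. auto.
Qed.

Lemma fl_minus {T} {F : (T -> Prop) -> Prop} {FF : Filter F} (f g : T -> R) (a b : R) :
  filterlim f F (locally a) -> filterlim g F (locally b) ->
  filterlim (fun x => f x - g x) F (locally (a - b)).
Proof.
  intros Hf Hg.
  apply (@filterlim_ext T R F _ FF (fun x => f x + (-1) * g x) (fun x => f x - g x)).
  intros; ring.
  apply (fl_eq _ (a + (-1) * b)). ring. apply fl_plus; auto. apply fl_mult; auto.
  apply filterlim_const.
Qed.

Section Main.
Variable VP : R.
Hypothesis HVP : 0 <= VP.

Definition aP (delta : R) (p : R) (t : nat) : R :=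
  delta ^ t * (p * pear_time_util VP p (vhigh p) t + (1 - p) * pear_time_util VP p vlow t).

Definition bP (delta : R) (t : nat) : R :=
  delta ^ t * (1 + ((rho2 VP) ^ t * (emax2 VP vlow) + (1 - (rho2 VP) ^ t) * (emax2 VP VP))).

Lemma pear_point delta t :
  filterlim (fun p => aP delta p t) (at_right 0) (locally (bP delta t)).
Proof.
  apply (filterlim_ext_loc (fun p => delta ^ t * (rho1 VP p ^ t * (p * emax2 VP (vhigh p))
      + (1 - rho1 VP p ^ t) * (p * (emax2 VP VP)) + (1 - p) * ((rho2 VP) ^ t * (emax2 VP vlow) + (1 - (rho2 VP) ^ t) * (emax2 VP VP))))).
  { apply ev_at_right. eapply ev_impl. 2: apply (explore_simple VP t).
    intros p Hp H. unfold aP. rewrite !time_util_eq by auto.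
    change (choiceN VP (vhigh p)) with (rho1 VP p). change (choiceN VP vlow) with (rho2 VP).
    ring. }
  unfold bP. apply fl_eq with (delta ^ t * (1 ^ t * 1 + (1 - 1 ^ t) * (0 * (emax2 VP VP))
      + (1 - 0) * ((rho2 VP) ^ t * (emax2 VP vlow) + (1 - (rho2 VP) ^ t) * (emax2 VP VP)))).
  { rewrite pow1. ring. }
  apply fl_mult. apply filterlim_const.
  apply fl_plus. apply fl_plus.
  - apply fl_mult. apply fl_pow. apply lim_rho1. apply lim_pE.
  - apply fl_mult. apply fl_minus. apply filterlim_const. apply fl_pow. apply lim_rho1.
    apply fl_mult. apply lim_id. apply filterlim_const.
  - apply fl_mult. apply fl_minus. apply filterlim_const. apply lim_id. apply filterlim_const.
Qed.

Lemma pear_dom delta : 0 <= delta ->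
  ev (fun p => forall t, Rabs (aP delta p t) <= (2 + (emax2 VP VP) + ((emax2 VP vlow) + (emax2 VP VP))) * delta ^ t).
Proof.
  intros Hd.
  pose proof (fl_lim0 _ _ (lim_pE VP) 1 ltac:(lra)) as H1.
  eapply ev_impl. 2: apply (ev_and _ _ H1 (ev_and _ _ (ev_impl (fun p => True) _ (fun p _ _ => I) (ex_intro _ 1 (conj Rlt_0_1 (fun _ _ => I)))) (ex_intro (fun eta => 0 < eta /\ forall p, 0 < p < eta -> p < 1) 1 (conj Rlt_0_1 (fun p Hp => proj2 Hp))))).
  intros p Hp [Ha [_ Hp1]] t. unfold aP.
  pose proof (time_util_bound VP p (vhigh p) t). pose proof (time_util_bound VP p vlow t).
  pose proof (emax2_nonneg VP VP).
  assert (p * emax2 VP (vhigh p) <= 2) by (apply Rabs_def2 in Ha; lra).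
  assert (0 <= delta ^ t) by (apply pow_le; lra).
  rewrite Rabs_mult, (Rabs_right (delta ^ t)) by lra. rewrite Rmult_comm.
  apply Rmult_le_compat_r; auto.
  assert (p * pear_time_util VP p (vhigh p) t <= p * emax2 VP (vhigh p) + p * (emax2 VP VP)) by nra.
  assert (0 <= p * pear_time_util VP p (vhigh p) t) by nra.
  assert (0 <= (1 - p) * pear_time_util VP p vlow t) by nra.
  assert ((1 - p) * pear_time_util VP p vlow t <= (emax2 VP vlow) + (emax2 VP VP)) by nra.
  rewrite Rabs_right by lra. nra.
Qed.
End Main.

Theorem corollary1 (VP : R) (HVP : 0 <= VP) :
  exists g : R -> R,
    (exists d0 : R, d0 < 1 /\
       forall delta : R, 0 <= delta -> d0 < delta -> delta < 1 ->
         filterlim (fun p => UtilPEAR VP p delta / UtilOPT VP p delta)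
                   (at_right 0) (locally (g delta))) /\
    filterlim g (at_left 1) (locally 1).
Proof.
  pose (L := emax2 VP VP). pose (E2 := emax2 VP vlow). pose (r2 := rho2 VP).
  assert (HL : 0 <= L) by apply emax2_nonneg.
  assert (Hr2 : 0 < r2 < 1) by apply (choiceN_bounds VP vlow).
  exists (fun d => ((1 + L) / (1 - d) + (E2 - L) / (1 - d * r2)) * / ((1 + L) / (1 - d))).
  split.
  - exists 0. split. lra. intros d Hd0 Hd Hd1.
    assert (Hdr : 0 <= d * r2 < 1) by nra.
    assert (Sb : Series (bP VP d) = (1 + L) / (1 - d) + (E2 - L) / (1 - d * r2)).
    { apply is_series_unique. eapply is_series_ext.
      2: apply (is_series_plus _ _ _ _ (geom_scaled (1 + L) d ltac:(lra))
                   (geom_scaled (E2 - L) (d * r2) Hdr)).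
      intros n. 
      assert (E : (1 + L) * d ^ n + (E2 - L) * (d * r2) ^ n = bP VP d n).
      { unfold bP. rewrite Rpow_mult_distr. unfold L, E2, r2. ring. }
      exact E. }
    set (c := fun p => p * opt_stage_util VP (vhigh p) + (1 - p) * opt_stage_util VP vlow).
    assert (Hopt : forall p, UtilOPT VP p d = c p / (1 - d)).
    { intros p. unfold UtilOPT. apply is_series_unique. eapply is_series_ext.
      2: apply (geom_scaled (c p) d); lra. intros n.
      assert (E : c p * d ^ n = d ^ n * c p) by ring. exact E. }
    assert (Hc : filterlim c (at_right 0) (locally (1 + L))).
    { apply (filterlim_ext_loc (fun p => p * emax2 (vhigh p) (vhigh p) + (1 - p) * L)).
      - apply ev_at_right. exists (/ (1 + VP)). split. apply Rinv_0_lt_compat; lra.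
        intros p Hp. unfold c, opt_stage_util.
        destruct (Rlt_dec VP vlow) as [Hc|_]. unfold vlow in Hc; lra.
        destruct (Rlt_dec VP (vhigh p)) as [_|Hn]. reflexivity. exfalso. apply Hn.
        unfold vhigh. apply (Rmult_lt_reg_r p). lra. unfold Rdiv.
        rewrite Rmult_assoc, Rinv_l, Rmult_1_r by lra.
        destruct Hp as [Hp1 Hp2].
        apply (Rmult_lt_compat_r (1 + VP)) in Hp2; [|lra]. rewrite Rinv_l in Hp2 by lra. nra.
      - apply (fl_eq _ (1 + (1 - 0) * L)). ring. apply fl_plus. apply lim_pEE.
        apply fl_mult. apply fl_minus. apply filterlim_const. apply lim_id. apply filterlim_const. }
    apply (filterlim_ext (fun p => Series (aP VP d p) * / (c p / (1 - d)))).
    { intros p. rewrite Hopt. reflexivity. }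
    apply (fl_eq _ (Series (bP VP d) * / ((1 + L) / (1 - d)))). rewrite Sb. reflexivity.
    apply fl_mult.
    + apply (dom_series _ _ d (2 + emax2 VP VP + (emax2 VP vlow + emax2 VP VP))). lra.
      intros t. apply pear_point. apply pear_dom; auto.
    + apply (filterlim_comp _ _ _ (fun p => c p / (1 - d)) Rinv _ (locally ((1 + L) / (1 - d)))).
      * apply (fl_mult c (fun _ => / (1 - d))). auto. apply filterlim_const.
      * apply fl_inv. apply Rgt_not_eq. apply Rdiv_lt_0_compat; lra.
  - apply filterlim_locally. intros eps.
    assert (HK : 0 < Rabs (E2 - L) + 1) by (pose proof (Rabs_pos (E2 - L)); lra).
    set (eta := Rmin 1 (eps * (1 - r2) / (Rabs (E2 - L) + 1))).
    assert (Heta : 0 < eta).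
    { apply Rmin_pos. lra. apply Rdiv_lt_0_compat; auto. apply Rmult_lt_0_compat. apply cond_pos. lra. }
    exists (mkposreal eta Heta). intros y Hy Hy1. apply ball_R in Hy. simpl in Hy1. change (Rabs (y - 1) < eta) in Hy.
    apply ball_R.
    apply Rabs_def2 in Hy. destruct Hy as [Hy2 Hy3].
    pose proof (Rmin_l 1 (eps * (1 - r2) / (Rabs (E2 - L) + 1))).
    pose proof (Rmin_r 1 (eps * (1 - r2) / (Rabs (E2 - L) + 1))).
    fold eta in H, H0.
    assert (Hy0 : 0 < y < 1) by lra.
    assert (HD : 1 - r2 <= (1 + L) * (1 - y * r2)).
    { assert (1 - r2 <= 1 - y * r2) by nra. assert (0 <= L * (1 - y * r2)) by (apply Rmult_le_pos; nra). nra. }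
    assert (HD0 : 0 < (1 + L) * (1 - y * r2)) by lra.
    replace (((1 + L) / (1 - y) + (E2 - L) / (1 - y * r2)) * / ((1 + L) / (1 - y)) - 1)
      with ((E2 - L) * (1 - y) / ((1 + L) * (1 - y * r2))).
    2:{ field. repeat split; try lra. nra. }
    unfold Rdiv. rewrite Rabs_mult, Rabs_mult, (Rabs_right (1 - y)) by lra.
    rewrite (Rabs_right (/ _)) by (left; apply Rinv_0_lt_compat; lra).
    apply (Rmult_lt_reg_r ((1 + L) * (1 - y * r2))). lra.
    rewrite Rmult_assoc, Rinv_l, Rmult_1_r by lra.
    assert (Rabs (E2 - L) * (1 - y) < eps * (1 - r2)).
    { assert (1 - y < eps * (1 - r2) / (Rabs (E2 - L) + 1)) by lra.
      assert ((Rabs (E2 - L) + 1) * (1 - y) < eps * (1 - r2)).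
      { replace (eps * (1 - r2)) with ((Rabs (E2 - L) + 1) * (eps * (1 - r2) / (Rabs (E2 - L) + 1))) by (field; lra).
        apply Rmult_lt_compat_l; lra. }
      pose proof (Rabs_pos (E2 - L)). nra. }
    pose proof (cond_pos eps). nra.
Qed.
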